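(* Let $A$ be a vector space of dimension $n\geq 2$ over $\mathbb F$, and let $f,g:A\to\mathbb F$ be linear functions. Define $\circ:A\otimes A\to A$ by $x\circ y=f(y)x+g(x)y$ for all $x,y\in A$. Then $(A,\circ)$ is an anti-pre-Lie algebra if and only if $f=0$ or $g=2f$.
   Context: All vector spaces are finite-dimensional over a field $\mathbb F$ of characteristic $0$. An anti-pre-Lie algebra is a vector space $A$ with a bilinear operation $\circ$ such that, writing $[x,y]=x\circ y-y\circ x$, for all $x,y,z\in A$: (i) $x\circ(y\circ z)-y\circ(x\circ z)=[y,x]\circ z$, and (ii) $[x,y]\circ z+[y,z]\circ x+[z,x]\circ y=0$. *)

(* Defs.v *)
From HB Require Import structures.
From mathcomp Require Import all_boot all_order all_algebra.
Set Implicit Arguments. Unset Strict Implicit. Unset Printing Implicit Defensive.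
Import GRing.Theory.
Local Open Scope ring_scope.

Definition anti_pre_Lie (F : fieldType) (A : vectType F) (op : A -> A -> A) : Prop :=
  let br := fun x y => op x y - op y x in
  (forall x y z : A, forall a : F, op (a *: x + y) z = a *: op x z + op y z) /\
  (forall x y z : A, forall a : F, op x (a *: y + z) = a *: op x y + op x z) /\
  (forall x y z : A, op x (op y z) - op y (op x z) = op (br y x) z) /\
  (forall x y z : A, op (br x y) z + op (br y z) x + op (br z x) y = 0).

Definition fg_prod (F : fieldType) (A : vectType F) (f g : A -> F) (x y : A) : A :=
  f y *: x + g x *: y.

(* Main.v *)
Require Import Defs.
From HB Require Import structures.
From mathcomp Require Import all_boot all_order all_algebra.
From mathcomp Require Import ring.
From Stdlib Require Import Classical.
Import GRing.Theory.
Local Open Scope ring_scope.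
Import VectorInternalTheory.
Section S.
Variables (F : fieldType) (A : vectType F) (f g : {linear A -> F^o}).
Lemma opE x y : fg_prod f g x y = f y *: x + g x *: y. Proof. by []. Qed.
Lemma fD x y : f (x + y) = f x + f y. Proof. exact: raddfD. Qed.
Lemma fZ a x : f (a *: x) = a * f x. Proof. exact: linearZ. Qed.
Lemma gD x y : g (x + y) = g x + g y. Proof. exact: raddfD. Qed.
Lemma gZ a x : g (a *: x) = a * g x. Proof. exact: linearZ. Qed.
Lemma vD x y : v2r (x + y : A) = v2r x + v2r y. Proof. exact: raddfD. Qed.
Lemma vZ a (x : A) : v2r (a *: x) = a *: v2r x. Proof. exact: linearZ. Qed.
Lemma vB x y : v2r (x - y : A) = v2r x - v2r y. Proof. exact: raddfB. Qed.
Lemma fB x y : f (x - y) = f x - f y. Proof. exact: raddfB. Qed.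
Lemma gB x y : g (x - y) = g x - g y. Proof. exact: raddfB. Qed.
Lemma fN x : f (- x) = - f x. Proof. exact: raddfN. Qed.
Lemma gN x : g (- x) = - g x. Proof. exact: raddfN. Qed.
Lemma vN x : v2r (- x : A) = - v2r x. Proof. exact: raddfN. Qed.
Lemma v0 : v2r (0 : A) = 0. Proof. exact: raddf0. Qed.
Ltac vnorm := apply: (@v2r_inj _ A); rewrite ?opE; rewrite ?(fD, fZ, gD, gZ, fB, gB, fN, gN); rewrite ?(vD, vB, vZ, v0, vN); apply/rowP => i; rewrite !mxE /=.
Lemma iE x y z : fg_prod f g x (fg_prod f g y z) - fg_prod f g y (fg_prod f g x z)
  - fg_prod f g (fg_prod f g y x - fg_prod f g x y) z =
  f z *: ((2 * f y - g y) *: x - (2 * f x - g x) *: y)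
  - (f y * (2 * f x - g x) - f x * (2 * f y - g y)) *: z.
Proof. vnorm; ring. Qed.
Lemma iiE x y z :
  let br := fun x y => fg_prod f g x y - fg_prod f g y x in
  fg_prod f g (br x y) z + fg_prod f g (br y z) x + fg_prod f g (br z x) y = 0.
Proof. move=> br; rewrite /br; vnorm; ring. Qed.
Lemma bil1 x y z a : fg_prod f g (a *: x + y) z = a *: fg_prod f g x z + fg_prod f g y z.
Proof. vnorm; ring. Qed.
Lemma bil2 x y z a : fg_prod f g x (a *: y + z) = a *: fg_prod f g x y + fg_prod f g x z.
Proof. vnorm; ring. Qed.
Lemma fwd_step x y :
  f x *: ((2 * f y - g y) *: x - (2 * f x - g x) *: y)
  - (f y * (2 * f x - g x) - f x * (2 * f y - g y)) *: x = 0 ->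
  (f x * (2 * f x - g x)) *: y = (2 * f x * (2 * f y - g y) - f y * (2 * f x - g x)) *: x.
Proof.
move=> H; apply/eqP; rewrite -subr_eq0 -oppr_eq0 -H; apply/eqP; vnorm; ring.
Qed.
End S.

Theorem proposition2p7 (F : fieldType) (A : vectType F) (n : nat)
  (charF0 : [pchar F] =i pred0)
  (hdim : \dim (fullv : {vspace A}) = n) (hn : (2 <= n)%N)
  (f g : {linear A -> F^o}) :
  anti_pre_Lie (fg_prod f g) <->
  ((forall x : A, f x = 0) \/ (forall x : A, g x = 2 * f x)).
Proof.
split.
- case=> _ [_ [Hi _]].
  have P x : f x * (2 * f x - g x) = 0.
    apply/eqP; apply/negPn/negP => nz.
    have sub : (fullv <= <[x]>)%VS.
      apply/subvP => y _.
      have E := @fwd_step F A f g x y.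
      rewrite -iE Hi subrr in E; have {}E := E erefl.
      rewrite -[y](scalerK nz) E scalerA; apply: memvZ; exact: memv_line.
    have := dimvS sub; rewrite dim_vline hdim.
    by case: (x != 0) => /= h; move: (leq_trans hn h).
  case: (classic (forall x : A, f x = 0)) => [hf|]; first by left.
  move=> /not_all_ex_not [a fa].
  case: (classic (forall x : A, g x = 2 * f x)) => [hg|]; first by right.
  move=> /not_all_ex_not [b gb].
  exfalso.
  have ka : 2 * f a - g a = 0.
    by have := P a; move/eqP; rewrite mulf_eq0 => /orP[/eqP//|/eqP].
  have kb : 2 * f b - g b != 0 by rewrite subr_eq0; apply/eqP => e; apply: gb.
  have fb : f b = 0.
    by have := P b; move/eqP; rewrite mulf_eq0 (negPf kb) orbF => /eqP.
  have := P (a + b); rewrite fD gD.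
  have -> : 2 * (f a + f b) - (g a + g b) = (2 * f a - g a) + (2 * f b - g b) by ring.
  rewrite ka add0r {1}fb addr0 => /eqP; rewrite mulf_eq0 (negPf kb) orbF => /eqP.
  exact: fa.
- move=> H; rewrite /anti_pre_Lie /=; split; first exact: bil1.
  split; first exact: bil2.
  split; last by move=> x y z; have := @iiE F A f g x y z.
  move=> x y z; apply/eqP; rewrite -subr_eq0 iE; apply/eqP.
  case: H => H.
  + by rewrite !H !(subrr, mulr0, mul0r, scale0r, scaler0).
  + by rewrite !H !(subrr, mulr0, mul0r, scale0r, scaler0).
Qed.
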